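(* For all $a, b \in \mathbb{N}$, $R_\mathrm{cyc}(K_a, P_b^\mathrm{mon}) = 1 + (a-1)(b-1)$.
   Context: All graphs are finite, simple and undirected, and a graph of order $n$ has vertex set $\{0,1,\ldots,n-1\}$; $K_n$ is the complete graph on $\{0,\ldots,n-1\}$. A $2$-edge-coloring of $K_n$ assigns each edge a color in $\{1,2\}$. An embedding of $H$ in color $j$ is an injective map $\varphi\colon V(H)\to V(K_n)$ such that every edge $uv$ of $H$ goes to an edge $\{\varphi(u),\varphi(v)\}$ of color $j$; it is increasing up to a cyclic permutation if there exists $t\in V(H)$ such that $(\varphi(t),\ldots,\varphi(|H|-1),\varphi(0),\ldots,\varphi(t-1))$ is increasing. $R_\mathrm{cyc}(H_1,H_2)$ is the smallest $n$ such that every $2$-edge-coloring of $K_n$ admits an embedding of $H_1$ in color $1$ or of $H_2$ in color $2$ that is increasing up to a cyclic permutation. The monotone path $P_n^\mathrm{mon}$ has edges $\{i,i+1\}$, $0\le i\le n-2$. *)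

(* Defs.v *)
From mathcomp Require Import all_boot.
Set Implicit Arguments. Unset Strict Implicit. Unset Printing Implicit Defensive.

Record sgraph := SGraph {
  order : nat;
  adj : rel 'I_order;
  adj_sym : symmetric adj;
  adj_irr : irreflexive adj }.

Definition K_adj (n : nat) : rel 'I_n := fun i j => i != j.
Lemma K_sym n : symmetric (@K_adj n).
Proof. by move=> i j; rewrite /K_adj eq_sym. Qed.
Lemma K_irr n : irreflexive (@K_adj n).
Proof. by move=> i; rewrite /K_adj eqxx. Qed.
Definition K (n : nat) : sgraph := SGraph (@K_sym n) (@K_irr n).

Definition P_adj (n : nat) : rel 'I_n :=
  fun i j => ((val i).+1 == val j) || ((val j).+1 == val i).
Lemma P_sym n : symmetric (@P_adj n).
Proof. by move=> i j; rewrite /P_adj orbC. Qed.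
Lemma P_irr n : irreflexive (@P_adj n).
Proof. by move=> i; rewrite /P_adj !(gtn_eqF (ltnSn _)). Qed.
Definition Pmon (n : nat) : sgraph := SGraph (@P_sym n) (@P_irr n).

(* A 2-edge-coloring of K_n: each edge {x,y} (a 2-element subset of 'I_n)
   gets a color in {1,2}; values on non-edges are irrelevant. *)
Definition two_coloring (n : nat) (col : {set 'I_n} -> nat) : Prop :=
  forall e : {set 'I_n}, #|e| = 2 -> col e = 1 \/ col e = 2.

Definition embedding_in_color (H : sgraph) (n : nat) (col : {set 'I_n} -> nat)
  (j : nat) (phi : 'I_(order H) -> 'I_n) : Prop :=
  injective phi /\
  forall u v : 'I_(order H), adj u v -> col [set phi u; phi v] = j.

Definition cyc_increasing (H : sgraph) (n : nat) (phi : 'I_(order H) -> 'I_n)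
  : Prop :=
  exists t : 'I_(order H),
    sorted ltn [seq val (phi i) | i <- rot t (enum 'I_(order H))].

Definition cyc_arrows (H1 H2 : sgraph) (n : nat) : Prop :=
  forall col : {set 'I_n} -> nat, two_coloring col ->
    (exists phi, embedding_in_color col 1 phi /\ cyc_increasing (H:=H1) phi) \/
    (exists phi, embedding_in_color col 2 phi /\ cyc_increasing (H:=H2) phi).

Definition Rcyc_eq (H1 H2 : sgraph) (N : nat) : Prop :=
  cyc_arrows H1 H2 N /\ forall m, m < N -> ~ cyc_arrows H1 H2 m.

(* Main.v *)
Require Import Defs.
From mathcomp Require Import all_boot zify.
Set Implicit Arguments. Unset Strict Implicit.

Definition ltv (n : nat) : rel 'I_n := fun u v => val u < val v.

Lemma ltv_trans n : transitive (@ltv n).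
Proof. move=> y x z; rewrite /ltv; exact: ltn_trans. Qed.

Lemma seq_embed (n k : nat) (x0 : 'I_n) (s : seq 'I_n) :
  size s = k -> pairwise (@ltv n) s ->
  injective (fun i : 'I_k => nth x0 s i) /\
  sorted ltn [seq val (nth x0 s (val i)) | i <- enum 'I_k].
Proof.
move=> hs /(pairwiseP x0) hp; split.
  move=> i j /= hij; apply/val_inj/eqP.
  case: (ltngtP (val i) (val j)) => // [lt|gt].
  - have := hp (val i) (val j); rewrite /ltv hij ltnn; apply=> //;
      rewrite inE /= hs ?ltn_ord //.
  - have := hp (val j) (val i); rewrite /ltv hij ltnn; apply=> //;
      rewrite inE /= hs ?ltn_ord //.
rewrite (map_comp (fun m => val (nth x0 s m)) val) val_enum_ord.
have -> : [seq val (nth x0 s m) | m <- iota 0 k] = map val (mkseq (nth x0 s) k)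
  by rewrite /mkseq -map_comp.
rewrite -hs mkseq_nth.
rewrite sorted_map sorted_pairwise; last exact: ltv_trans.
by apply/(pairwiseP x0).
Qed.
Definition R1 n (col : {set 'I_n} -> nat) : rel 'I_n :=
  fun u v => (val u < val v) && (col [set u; v] == 1).
Definition R2 n (col : {set 'I_n} -> nat) : rel 'I_n :=
  fun u v => (val u < val v) && (col [set u; v] == 2).

Lemma upper n (col : {set 'I_n} -> nat) (hc : two_coloring col) (a : nat)
  (ha : 1 <= a) : forall b (S : seq 'I_n), sorted (@ltv n) S ->
  1 + (a - 1) * b <= size S ->
  (exists s, size s = a /\ pairwise (R1 col) s) \/
  (exists x rest, x \in S /\ size rest = b /\ path (R2 col) x rest).
Proof.
elim=> [|b IH] S hS hsz.
  right; case: S hS hsz => [|x S] //= _ _; exists x, [::]; by rewrite inE eqxx.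
pose minl := fun v : 'I_n => ~~ has (fun u => R2 col u v) S.
have hpw : pairwise (@ltv n) S by rewrite -sorted_pairwise //; exact: ltv_trans.
case: (leqP a (count minl S)) => hcnt.
  left; exists (take a [seq v <- S | minl v]); split.
    by rewrite size_take size_filter; case: ltngtP hcnt => //; lia.
  apply: subseq_pairwise (take_subseq _ _) _.
  have hpf : pairwise (@ltv n) [seq v <- S | minl v].
    exact: subseq_pairwise (filter_subseq _ _) hpw.
  apply: (sub_in_pairwise (P := mem [seq v <- S | minl v])) hpf; last first.
    by apply/allP.
  move=> u v; rewrite !mem_filter => /andP [_ uS] /andP [mv _] huv.
  rewrite /R1; apply/andP; split => //.
  have hne : u != v by apply/eqP => e; move: huv; rewrite e /ltv ltnn.
  have := hc [set u; v]; rewrite cards2 hne => /(_ erefl) [->//|h2].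
  move: mv; rewrite /minl; move/hasPn => /(_ u uS); rewrite /R2 h2 eqxx andbT.
  by rewrite [_ < _]huv.
have hS' : sorted (@ltv n) [seq v <- S | predC minl v].
  by apply: sorted_filter => //; exact: ltv_trans.
have hsz' : 1 + (a - 1) * b <= size [seq v <- S | predC minl v].
  rewrite size_filter; have := count_predC minl S; move: hsz; rewrite mulnS.
  move=> h1 h2; rewrite (_ : count [eta predC minl] S = count (predC minl) S) //; lia.
case: (IH _ hS' hsz') => [h|[x [rest [xS [hr hp]]]]]; first by left.
right; move: xS; rewrite mem_filter => /andP [/= /negPn /hasP [u uS hu] _].
by exists u, (x :: rest); rewrite uS /= hr hu hp.
Qed.

Lemma arrows a b (ha : 1 <= a) (hb : 1 <= b) :
  cyc_arrows (K a) (Pmon b) (1 + (a - 1) * (b - 1)).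
Proof.
move=> col hc.
set N := 1 + (a - 1) * (b - 1).
have x0 : 'I_N := Ordinal (ltn0Sn ((a - 1) * (b - 1))).
have hS : sorted (@ltv N) (enum 'I_N).
  by have := iota_ltn_sorted 0 N; rewrite -val_enum_ord sorted_map.
have hsz : 1 + (a - 1) * (b - 1) <= size (enum 'I_N) by rewrite size_enum_ord.
case: (upper hc ha hS hsz) => [[s [hs hp]]|[x [rest [_ [hr hp]]]]].
  left.
  have hpl : pairwise (@ltv N) s.
    apply: (sub_in_pairwise (P := predT)) hp; last exact/allP.
    by move=> u v _ _ /andP [].
  have [hinj hsort] := seq_embed x0 hs hpl.
  exists (fun i : 'I_a => nth x0 s i); split; last first.
    by exists (Ordinal ha); rewrite /= rot0.
  split=> //= u v; rewrite /K_adj => huv.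
  move/(pairwiseP x0): hp => hp.
  case: (ltngtP (val u) (val v)) => [lt|gt|e].
  - by have := hp u v; rewrite !inE hs !ltn_ord /R1 => /(_ isT isT lt) /andP [_ /eqP].
  - by have := hp v u; rewrite !inE hs !ltn_ord /R1 setUC => /(_ isT isT gt) /andP [_ /eqP].
  - by move: huv; rewrite (val_inj e) eqxx.
right.
have hs : size (x :: rest) = b.
  by rewrite /= hr subn1 prednK.
have hpl : pairwise (@ltv N) (x :: rest).
  rewrite -sorted_pairwise; last exact: ltv_trans.
  by apply: sub_path hp => u v /andP [].
have [hinj hsort] := seq_embed x0 hs hpl.
exists (fun i : 'I_b => nth x0 (x :: rest) i); split; last first.
  by exists (Ordinal hb); rewrite /= rot0.
split=> //= u v; rewrite /P_adj.
move/(pathP x0): hp => hp.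
case/orP => /eqP e.
- have hu : val u < size rest by rewrite hr; have hv : val v < b := ltn_ord v; lia.
  have := hp _ hu; rewrite /R2 -e /= => /andP [_ /eqP] //.
- have hu : val v < size rest by rewrite hr; have hv : val u < b := ltn_ord u; lia.
  have := hp _ hu; rewrite /R2 -e /= setUC => /andP [_ /eqP] //.
Qed.

Lemma lower a b m (ha : 1 <= a) (hb : 1 <= b)
  (hm : m < 1 + (a - 1) * (b - 1)) : ~ cyc_arrows (K a) (Pmon b) m.
Proof.
set d := b - 1.
pose col := fun e : {set 'I_m} =>
  if [exists u in e, exists v in e, (val u %/ d != val v %/ d)] then 1 else 2.
have c1 : forall x y : 'I_m, col [set x; y] = 1 -> val x %/ d != val y %/ d.
  move=> x y; rewrite /col; case: ifP => //.
  move=> /existsP [u /andP [hu /existsP [v /andP [hv huv]]]] _.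
  move: hu hv huv; rewrite !inE => /orP [] /eqP -> /orP [] /eqP ->;
    by rewrite ?eqxx // eq_sym.
have c2 : forall x y : 'I_m, col [set x; y] = 2 -> val x %/ d = val y %/ d.
  move=> x y; rewrite /col; case: ifP => // /existsPn h _.
  move: (h x); rewrite set21 /= => /existsPn /(_ y).
  by rewrite set22 /= negbK => /eqP.
have hc : two_coloring col by move=> e _; rewrite /col; case: ifP; auto.
move=> /(_ col hc) [[phi [[hinj hcol] _]] | [phi [[hinj hcol] _]]].
- case: (posnP m) => [m0|mpos].
    by move: (phi (Ordinal ha)); rewrite m0 => -[].
  have hd : 0 < d.
    have : 0 < (a - 1) * d by rewrite /d; lia.
    by rewrite muln_gt0 => /andP [].
  have hlt : forall u : 'I_a, val (phi u) %/ d < a - 1.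
    move=> u; rewrite ltn_divLR //; have hv : val (phi u) < m := ltn_ord _; rewrite /d; lia.
  pose g := fun u : 'I_a => Ordinal (hlt u).
  have ginj : injective g.
    move=> u v /(congr1 val) /= e; apply/eqP; apply/negPn/negP => huv.
    by move: (c1 _ _ (hcol u v huv)); rewrite e eqxx.
  by have := @leq_card _ _ g ginj; rewrite !card_ord; lia.
- case: (posnP m) => [m0|mpos].
    by move: (phi (Ordinal hb)); rewrite m0 => -[].
  have hd : 0 < d.
    have : 0 < (a - 1) * d by rewrite /d; lia.
    by rewrite muln_gt0 => /andP [].
  have blk0 : forall k (hk : k < b),
      val (phi (Ordinal hk)) %/ d = val (phi (Ordinal hb)) %/ d.
    elim=> [|k IH] hk.
      by rewrite (_ : Ordinal hk = Ordinal hb) //; exact: val_inj.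
    have hk' : k < b := ltnW hk.
    rewrite -(IH hk'); symmetry; apply: c2; apply: hcol.
    by rewrite /= /P_adj /= eqxx.
  have blk : forall u : 'I_b, val (phi u) %/ d = val (phi (Ordinal hb)) %/ d.
    move=> u; have := blk0 _ (ltn_ord u).
    by rewrite (_ : Ordinal (ltn_ord u) = u) //; exact: val_inj.
  pose h := fun u : 'I_b => Ordinal (ltn_pmod (val (phi u)) hd).
  have hinj' : injective h.
    move=> u v /(congr1 val) /= e; apply: hinj; apply: val_inj.
    by rewrite (divn_eq (val (phi u)) d) (divn_eq (val (phi v)) d) e !blk.
  by have := @leq_card _ _ h hinj'; rewrite !card_ord /d; lia.
Qed.

Theorem corollary4p21 (a b : nat) (ha : 1 <= a) (hb : 1 <= b) :
  Rcyc_eq (K a) (Pmon b) (1 + (a - 1) * (b - 1)).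
Proof.
split; first exact: arrows.
by move=> m hm; apply: lower.
Qed.
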